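(* Let $G=(V,E,w)$ be a finite undirected graph with positive vertex weights and let $IC, C\subseteq V$. (a) Suppose $IC\subseteq VC_w$ for some minimum weight vertex cover $VC_w$ of $G$. Then $w(p)\le \alpha_w(G[N(p)\setminus IC])$ for every $p\in IC$. Moreover, if $v\in IC$ and $u\in N^2(v)$ satisfy $w(v)>\alpha_w(G[N(v)\setminus(IC\cup N(u))])$, then $IC\cup\{u\}\subseteq VC_w$. (b) Suppose $C$ is contained in every minimum weight vertex cover of $G$. Then $w(p)<\alpha_w(G[N(p)\setminus C])$ for every $p\in C$. Moreover, if $v\in C$ and $u\in N^2(v)$ satisfy $w(v)\ge\alpha_w(G[N(v)\setminus(C\cup N(u))])$, then $C\cup\{u\}$ is contained in every minimum weight vertex cover of $G$.
   Context: $G=(V,E,w)$ is a finite simple undirected graph with $w:V\to\mathbb{R}^{+}$; $w(S)=\sum_{v\in S}w(v)$. A vertex cover is a set $VC\subseteq V$ meeting every edge; a minimum weight vertex cover (MWVC) is one of minimum total weight. $N(v)$ is the neighbour set of $v$; $N^2(v)$ is the set of vertices at graph distance exactly $2$ from $v$. For $S\subseteq V$, $G[S]$ is the induced subgraph and $\alpha_w(G[S])$ is the maximum weight of an independent set in $G[S]$, with $\alpha_w(G[\emptyset])=0$. *)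

(* Defs.v *)
From HB Require Import structures.
From mathcomp Require Import all_boot all_order all_algebra.
Set Implicit Arguments. Unset Strict Implicit. Unset Printing Implicit Defensive.
Import Order.TTheory GRing.Theory Num.Theory.
Local Open Scope ring_scope.

Definition simple_graph (T : finType) (e : rel T) : Prop :=
  symmetric e /\ irreflexive e.

Definition weight (R : realFieldType) (T : finType) (w : T -> R) (S : {set T}) : R :=
  \sum_(x in S) w x.

Definition is_vc (T : finType) (e : rel T) (S : {set T}) : Prop :=
  forall x y, e x y -> x \in S \/ y \in S.

Definition is_mwvc (R : realFieldType) (T : finType) (e : rel T) (w : T -> R)
  (S : {set T}) : Prop :=
  is_vc e S /\ forall S', is_vc e S' -> weight w S <= weight w S'.

Definition indepb (T : finType) (e : rel T) (I : {set T}) : bool :=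
  [forall x in I, forall y in I, ~~ e x y].

(* alpha_w(G[S]) : max weight of an independent set contained in S
   (independent sets of G[S] are exactly independent sets of G inside S);
   alpha_w(G[emptyset]) = 0 since the empty set is the only candidate. *)
Definition alpha_w (R : realFieldType) (T : finType) (e : rel T) (w : T -> R)
  (S : {set T}) : R :=
  \big[Num.max/0]_(I in powerset S | indepb e I) weight w I.

Definition nbhd (T : finType) (e : rel T) (v : T) : {set T} := [set u | e v u].

Definition nbhd2 (T : finType) (e : rel T) (v : T) : {set T} :=
  [set u | [&& u != v, ~~ e v u & [exists x, e v x && e x u]]].

(* Main.v *)
Require Import Defs.
From HB Require Import structures.
From mathcomp Require Import all_boot all_order all_algebra.
From mathcomp Require Import lra.
Import Order.TTheory GRing.Theory Num.Theory.
Local Open Scope ring_scope.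

Section Aux.
Variables (R : realFieldType) (T : finType) (e : rel T) (w : T -> R).
Hypothesis He : simple_graph e.

Lemma weight_swap (S D : {set T}) v : v \in S -> [disjoint S & D] ->
  weight w (S :\ v :|: D) = weight w S - w v + weight w D.
Proof.
move=> vS dis; rewrite /weight.
rewrite (eq_bigl [predU (S :\ v) & D]); last by move=> x; rewrite !inE.
rewrite bigU /=; last first.
  apply: disjointWl dis; apply/subsetP=> x; rewrite !inE; case/andP=> _ ->.
  by [].
rewrite (big_setD1 v vS) /=.
by rewrite [w v + _]addrC addrK.
Qed.

Lemma swap_vc (S : {set T}) v : is_vc e S -> is_vc e (S :\ v :|: (nbhd e v :\: S)).
Proof.
case: He => sym irr.
move=> vc x y exy; rewrite !inE.
have [xv|xv] := eqVneq x v.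
  subst x; right.
  have yv : y != v by apply/eqP=> yv; subst y; rewrite irr in exy.
  rewrite yv /= exy /=; by case: (y \in S).
have [yv|yv] := eqVneq y v.
  subst y; left.
  have : e v x by rewrite sym.
  move=> evx; rewrite evx /=; by case: (x \in S).
case: (vc x y exy) => ->; [left|right]; by rewrite ?orbT.
Qed.

Lemma compl_indep (S A : {set T}) : is_vc e S -> indepb e (A :\: S).
Proof.
move=> vc; apply/forallP=> x; apply/implyP=> xA; apply/forallP=> y; apply/implyP=> yA.
apply/negP=> exy; move: xA yA; rewrite !inE.
by case: (vc x y exy) => ->.
Qed.

Lemma alpha_ge (S I : {set T}) : I \subset S -> indepb e I -> weight w I <= alpha_w e w S.
Proof.
move=> sub ind; rewrite /alpha_w.
apply: (@le_bigmax_cond _ R _ 0 I (fun I => (I \in powerset S) && indepb e I)).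
by rewrite powersetE sub ind.
Qed.

Lemma key (S : {set T}) v : is_mwvc e w S -> v \in S ->
  w v <= weight w (nbhd e v :\: S).
Proof.
move=> [vc mn] vS.
have := mn _ (@swap_vc S v vc).
rewrite weight_swap //; last first.
  by rewrite -setI_eq0 setIDA setIC -setIDA setDv setI0.
rewrite -subr_ge0; move=> h; rewrite -subr_ge0.
lra.
Qed.

Lemma mwvc_exists : exists S, is_mwvc e w S.
Proof.
pose P := fun S : {set T} => [forall x, forall y, e x y ==> (x \in S) || (y \in S)].
have PT : P setT by apply/forallP=> x; apply/forallP=> y; rewrite !inE implybT.
have PE S : reflect (is_vc e S) (P S).
  apply: (iffP idP).
    move=> /forallP H x y exy; move: (H x) => /forallP /(_ y) /implyP /(_ exy) /orP //.
  move=> H; apply/forallP=> x; apply/forallP=> y; apply/implyP=> exy; apply/orP; exact: H.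
case: (@arg_minP _ R _ setT P (weight w) PT) => S PS Hmin.
exists S; split; first exact/PE.
by move=> S' /PE; apply: Hmin.
Qed.

Lemma swap_mwvc (S : {set T}) v : is_mwvc e w S -> v \in S ->
  weight w (nbhd e v :\: S) <= w v ->
  is_mwvc e w (S :\ v :|: (nbhd e v :\: S)) /\ v \notin (S :\ v :|: (nbhd e v :\: S)).
Proof.
case: (He) => _ irr.
move=> [vc mn] vS hle; split; last by rewrite !inE eqxx vS.
split; first exact: swap_vc.
move=> S' vc'; apply: le_trans (mn _ vc').
rewrite weight_swap //; last by rewrite -setI_eq0 setIDA setIC -setIDA setDv setI0.
lra.
Qed.

Lemma nbhd_in (S : {set T}) u : is_vc e S -> u \notin S -> forall y, e u y -> y \in S.
Proof. by move=> vc uS y euy; case: (vc u y euy) => // h; rewrite h in uS. Qed.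

End Aux.
Arguments key {R T e w} He {S v} _ _.
Arguments alpha_ge {R T e w S I} _ _.
Arguments compl_indep {T e S A} _.
Arguments swap_mwvc {R T e w} He {S v} _ _ _.
Arguments nbhd_in {T e S u} _ _ y _.
Arguments mwvc_exists {R T} e w.

Theorem theorem2p3 (R : realFieldType) (T : finType) (e : rel T) (w : T -> R)
  (He : simple_graph e) (Hw : forall x, 0 < w x) (IC C : {set T}) :
  (forall VC : {set T}, is_mwvc e w VC -> IC \subset VC ->
     (forall p, p \in IC -> w p <= alpha_w e w (nbhd e p :\: IC)) /\
     (forall v u, v \in IC -> u \in nbhd2 e v ->
        alpha_w e w (nbhd e v :\: (IC :|: nbhd e u)) < w v ->
        IC :|: [set u] \subset VC)) /\
  ((forall VC : {set T}, is_mwvc e w VC -> C \subset VC) ->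
     (forall p, p \in C -> w p < alpha_w e w (nbhd e p :\: C)) /\
     (forall v u, v \in C -> u \in nbhd2 e v ->
        alpha_w e w (nbhd e v :\: (C :|: nbhd e u)) <= w v ->
        forall VC : {set T}, is_mwvc e w VC -> C :|: [set u] \subset VC)).
Proof.
split.
  move=> VC mw sub; split.
    move=> p pIC.
    have pVC : p \in VC by apply: (subsetP sub).
    apply: le_trans (key He mw pVC) _.
    apply: alpha_ge; last exact: compl_indep mw.1.
    apply/subsetP=> x; rewrite !inE; case/andP=> xVC ->; rewrite andbT.
    by apply/negP=> /(subsetP sub); rewrite (negbTE xVC).
  move=> v u vIC _ hlt; apply/subsetP=> x; rewrite !inE; case/orP=> [/(subsetP sub) //|/eqP ->].
  apply/negPn/negP=> uVC.
  have vVC : v \in VC by apply: (subsetP sub).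
  have := key He mw vVC.
  suff : weight w (nbhd e v :\: VC) <= alpha_w e w (nbhd e v :\: (IC :|: nbhd e u)).
    move=> h1 h2; have := le_lt_trans (le_trans h2 h1) hlt; by rewrite ltxx.
  apply: alpha_ge; last exact: compl_indep mw.1.
  apply/subsetP=> y; rewrite !inE; case/andP=> yVC ->; rewrite andbT.
  apply/negP; case/orP=> [/(subsetP sub)|/(nbhd_in mw.1 uVC)]; by rewrite (negbTE yVC).
move=> hC; split.
  move=> p pC.
  have [VC mw] := mwvc_exists e w.
  have pVC : p \in VC by apply: (subsetP (hC _ mw)).
  rewrite ltNge; apply/negP=> hle.
  have h1 : weight w (nbhd e p :\: VC) <= w p.
    apply: le_trans hle.
    apply: alpha_ge; last exact: compl_indep mw.1.
    apply/subsetP=> x; rewrite !inE; case/andP=> xVC ->; rewrite andbT.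
    by apply/negP=> /(subsetP (hC _ mw)); rewrite (negbTE xVC).
  have [mw' pn] := swap_mwvc He mw pVC h1.
  by move: pn; rewrite (subsetP (hC _ mw')).
move=> v u vC _ hle VC mw.
apply/subsetP=> x; rewrite !inE; case/orP=> [/(subsetP (hC _ mw)) //|/eqP ->].
apply/negPn/negP=> uVC.
have vVC : v \in VC by apply: (subsetP (hC _ mw)).
have h1 : weight w (nbhd e v :\: VC) <= w v.
  apply: le_trans hle.
  apply: alpha_ge; last exact: compl_indep mw.1.
  apply/subsetP=> y; rewrite !inE; case/andP=> yVC ->; rewrite andbT.
  apply/negP; case/orP=> [/(subsetP (hC _ mw))|/(nbhd_in mw.1 uVC)]; by rewrite (negbTE yVC).
have [mw' pn] := swap_mwvc He mw vVC h1.
by move: pn; rewrite (subsetP (hC _ mw')).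
Qed.
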